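(* Let $X$ be a topological space and $\{X_\alpha\}_{\alpha\in I}$ a family of subspaces of $X$, each of which is dense-connected. Suppose that for every non-empty open subset $U$ of $X$, either $U\cap\bigcup_{\alpha\in I}X_\alpha=\emptyset$ or $U\cap X_\alpha\neq\emptyset$ for every $\alpha\in I$. Then $\bigcup_{\alpha\in I}X_\alpha$ is dense-connected.
   Context: A space $X$ is dense-connected if every dense subset of $X$ (with the subspace topology) is connected. *)

(* Defs.v *)
From HB Require Import structures.
From mathcomp Require Import all_boot all_order all_algebra.
From mathcomp Require Import all_classical all_reals all_analysis.
Set Implicit Arguments. Unset Strict Implicit. Unset Printing Implicit Defensive.
Local Open Scope classical_set_scope.

Definition dense_in (T : topologicalType) (Y D : set T) : Prop :=
  D `<=` Y /\ (forall O : set T, open O -> O `&` Y !=set0 -> O `&` D !=set0).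

(* Y is dense-connected: every dense subset of Y (subspace topology) is
   connected.  [connected D] in MathComp-Analysis is connectedness of D with
   its subspace topology, which coincides with the subspace topology
   inherited from Y. *)
Definition dense_connected (T : topologicalType) (Y : set T) : Prop :=
  forall D : set T, dense_in Y D -> connected D.

(* Main.v *)
Require Import Defs.
From HB Require Import structures.
From mathcomp Require Import all_boot all_order all_algebra.
From mathcomp Require Import all_classical all_reals all_analysis.
Local Open Scope classical_set_scope.

Theorem mainTheorem12 (T : topologicalType) (I : Type) (X : I -> set T) :
  (forall a : I, dense_connected (X a)) ->
  (forall U : set T, open U -> U !=set0 ->
     U `&` (\bigcup_(a in [set: I]) X a) = set0 \/ (forall a : I, U `&` X a !=set0)) ->
  dense_connected (\bigcup_(a in [set: I]) X a).
Proof.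
move=> Xdc Hyp D [DY Dd] B [b Bb] [U oU BU] [C cC BC].
set Y := \bigcup_(a in [set: I]) X a.
apply: contrapT => BnD.
have [d Dd' dnB] : exists2 d, D d & ~ B d.
  apply: contrapT => H; apply: BnD; apply/seteqP; split.
    by move=> x; rewrite BU => -[].
  by move=> x Dx; apply: contrapT => nB; apply: H; exists x.
have bD : D b by move: Bb; rewrite BU => -[].
have bU : U b by move: Bb; rewrite BU => -[].
have oV : open (~` C) by exact: closed_openC cC.
have dV : (~` C) d by move=> Cd; apply: dnB; rewrite BC.
have UVY : forall y, U y -> (~` C) y -> Y y -> False.
  move=> y Uy Vy Yy.
  have [|z [[Uz Vz] Dz]] := Dd (U `&` ~` C) (openI oU oV).
    by exists y.
  have : B z by rewrite BU.
  by rewrite BC => -[].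
have DUV : forall x, D x -> U x \/ (~` C) x.
  move=> x Dx; case: (pselect (C x)) => Cx; last by right.
  have : B x by rewrite BC.
  by rewrite BU => -[]; left.
have [a _ Xab] : Y b by apply: DY.
have meetall : forall W y, open W -> W y -> Y y -> forall a, W `&` X a !=set0.
  move=> W y oW Wy Yy.
  have [H|] := Hyp W oW (ex_intro _ y Wy); last by [].
  by have : (W `&` Y) y by []; rewrite H.
have UX := meetall U b oU bU (DY b bD) a.
have VX := meetall _ d oV dV (DY d Dd') a.
set S := X a `&` (U `|` ~` C).
have Sd : dense_in (X a) S.
  split; first by move=> x [].
  move=> O oO [x [Ox Xx]].
  have [|e [Oe De]] := Dd O oO.
    by exists x; split => //; exists a.
  have oW : open (O `&` (U `|` ~` C)) by apply: openI => //; apply: openU.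
  have [e' [[Oe' UVe'] Xe']] := meetall _ e oW (conj Oe (DUV e De)) (DY e De) a.
  by exists e'.
have Scon := Xdc a S Sd.
have UVa : forall x, X a x -> U x -> (~` C) x -> False.
  by move=> x Xx Ux Vx; apply: (UVY x Ux Vx); exists a.
have := Scon (X a `&` U).
case: UX => u [Uu Xu].
move=> /(_ (ex_intro _ u (conj Xu Uu))).
have HS : X a `&` U = S `&` U.
  apply/seteqP; split => x /=.
    by move=> [Xx Ux]; split => //; split => //; left.
  by move=> [[Xx _] Ux].
have HC : X a `&` U = S `&` C.
  apply/seteqP; split => x /=.
    move=> [Xx Ux]; split; first by split => //; left.
    by apply: contrapT => nC; apply: (UVa x Xx Ux nC).
  by move=> [[Xx [Ux|Vx]] Cx] //.
move=> /(_ (ex_intro2 _ _ U oU HS) (ex_intro2 _ _ C cC HC)) E.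
case: VX => v [Vv Xv].
have : S v by split => //; right.
rewrite -E => -[_ Uv].
exact: (UVa v Xv Uv Vv).
Qed.
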